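(* There exists a non-commutative bilinear algorithm computing the product of two $7\times 7$ matrices using $250$ multiplications. That is, $\langle 7,7,7\rangle\leq 250$.
   Context: Fix a field $\mathbb{K}$. A non-commutative bilinear algorithm for multiplying an $a\times b$ matrix $A$ by a $b\times c$ matrix $B$ using $r$ multiplications consists of $r$ products $t_k=\big(\sum_{i,j}\alpha^{(k)}_{ij}a_{ij}\big)\big(\sum_{j,l}\beta^{(k)}_{jl}b_{jl}\big)$ with scalars $\alpha^{(k)}_{ij},\beta^{(k)}_{jl}\in\mathbb{K}$, together with scalars $\gamma^{(k)}_{il}\in\mathbb{K}$ such that $(AB)_{il}=\sum_{k=1}^r\gamma^{(k)}_{il}t_k$ for all $i,l$. This identity must hold when the entries of $A$ and $B$ lie in an arbitrary, not necessarily commutative, associative $\mathbb{K}$-algebra. The quantity $\langle a,b,c\rangle$ denotes the minimal such $r$, i.e. the tensor rank of the matrix multiplication tensor of format $(a,b,c)$. *)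

(* Defs.v *)
From HB Require Import structures.
From mathcomp Require Import all_boot all_order all_algebra.
Set Implicit Arguments. Unset Strict Implicit. Unset Printing Implicit Defensive.
Import GRing.Theory.
Local Open Scope ring_scope.

(* A non-commutative bilinear algorithm for multiplying an a x b matrix by a
   b x c matrix with r multiplications, over the field K:
   t_k = (sum_{i,j} alpha^(k)_{ij} a_{ij}) (sum_{j,l} beta^(k)_{jl} b_{jl}),
   (AB)_{il} = sum_k gamma^(k)_{il} t_k,
   for matrices with entries in an arbitrary (not necessarily commutative)
   associative K-algebra R. *)
Definition is_bilinear_algorithm (K : fieldType) (a b c r : nat)
  (alpha : 'I_r -> 'M[K]_(a, b)) (beta : 'I_r -> 'M[K]_(b, c))
  (gamma : 'I_r -> 'M[K]_(a, c)) : Prop :=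
  forall (R : algType K) (A : 'M[R]_(a, b)) (B : 'M[R]_(b, c))
         (i : 'I_a) (l : 'I_c),
    (A *m B) i l =
      \sum_(k < r) gamma k i l *:
        ((\sum_(i0 < a) \sum_(j0 < b) alpha k i0 j0 *: A i0 j0) *
         (\sum_(j0 < b) \sum_(l0 < c) beta k j0 l0 *: B j0 l0)).

Definition mxmul_rank_le (K : fieldType) (a b c r : nat) : Prop :=
  exists (alpha : 'I_r -> 'M[K]_(a, b)) (beta : 'I_r -> 'M[K]_(b, c))
         (gamma : 'I_r -> 'M[K]_(a, c)),
    is_bilinear_algorithm alpha beta gamma.

(* Main.v *)
Require Import Defs.
From mathcomp Require Import all_boot all_order all_algebra.
Set Implicit Arguments. Unset Strict Implicit. Unset Printing Implicit Defensive.
Import GRing.Theory.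
Local Open Scope ring_scope.

Fixpoint addrow (r1 r2 : seq int) : seq int :=
  match r1, r2 with
  | [::], _ => r2
  | _, [::] => r1
  | a :: r1', b :: r2' => (a + b) :: addrow r1' r2'
  end.

Lemma nth_addrow r1 r2 i : nth 0 (addrow r1 r2) i = nth 0 r1 i + nth 0 r2 i.
Proof.
elim: r1 r2 i => [|a r1 IH] [|b r2] [|i] //=; rewrite ?nth_nil ?add0r ?addr0 //.
Qed.

Fixpoint addmat (m1 m2 : seq (seq int)) : seq (seq int) :=
  match m1, m2 with
  | [::], _ => m2
  | _, [::] => m1
  | a :: m1', b :: m2' => addrow a b :: addmat m1' m2'
  end.

Lemma nth_addmat m1 m2 y z :
  nth 0 (nth [::] (addmat m1 m2) y) z =
  nth 0 (nth [::] m1 y) z + nth 0 (nth [::] m2 y) z.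
Proof.
elim: m1 m2 y => [|a m1 IH] [|b m2] [|y] //=; rewrite ?nth_nil ?add0r ?addr0 //.
exact: nth_addrow.
Qed.

Definition outer (a : int) (b c : seq int) : seq (seq int) :=
  [seq [seq a * u * v | v <- c] | u <- b].

Lemma nth_outer a b c y z :
  nth 0 (nth [::] (outer a b c) y) z = a * nth 0 b y * nth 0 c z.
Proof.
rewrite /outer; case: (ltnP y (size b)) => hy.
  rewrite (nth_map 0) //; case: (ltnP z (size c)) => hz.
    by rewrite (nth_map 0).
  rewrite (nth_default 0 hz) mulr0 nth_default // size_map.
  by [].
rewrite (nth_default [::]) ?size_map // (nth_default 0 hy) nth_nil.
by rewrite mulr0 mul0r.
Qed.

Definition term := (seq int * seq int * seq int)%type.

Definition slice (L : seq term) (x : nat) : seq (seq int) :=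
  foldr (fun t acc => let a := nth 0 t.1.1 x in
           if a == 0 then acc else addmat (outer a t.1.2 t.2) acc) [::] L.

Lemma nth_slice L x y z :
  nth 0 (nth [::] (slice L x) y) z =
  \sum_(t <- L) nth 0 t.1.1 x * nth 0 t.1.2 y * nth 0 t.2 z.
Proof.
elim: L => [|t L IH]; first by rewrite big_nil /= !nth_nil.
rewrite big_cons /= -IH.
case: eqP => [->|_]; first by rewrite !mul0r add0r.
by rewrite nth_addmat nth_outer.
Qed.

Definition expv (n x y z : nat) : int :=
  if [&& ((x %/ n)%N == (z %/ n)%N), ((x %% n)%N == (y %/ n)%N) & ((y %% n)%N == (z %% n)%N)] then 1 else 0.

Definition expslice (n x : nat) : seq (seq int) :=
  [seq [seq expv n x y z | z <- iota 0 (n * n)%N] | y <- iota 0 (n * n)%N].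

Definition check (n : nat) (L : seq term) : bool :=
  all (fun x => slice L x == expslice n x) (iota 0 (n * n)%N).

Definition dense (N : nat) (s : seq (nat * int)) : seq int :=
  [seq foldr (fun p acc => if p.1 == i then p.2 else acc) 0 s | i <- iota 0 N].

Lemma check_sound n L : check n L ->
  forall x y z, (x < n * n)%N -> (y < n * n)%N -> (z < n * n)%N ->
  \sum_(t <- L) nth 0 t.1.1 x * nth 0 t.1.2 y * nth 0 t.2 z = expv n x y z.
Proof.
move=> /allP H x y z hx hy hz.
have /eqP E : slice L x == expslice n x by apply: H; rewrite mem_iota add0n.
rewrite -nth_slice E /expslice (nth_map 0) ?size_iota // nth_iota //.
by rewrite (nth_map 0) ?size_iota // nth_iota.
Qed.

Definition p1 : int := Posz 1.
Definition m1 : int := Negz 0.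
Definition mk (N : nat) (a b c : seq (nat * int)) : term := (dense N a, dense N b, dense N c).
Definition t0 : term := ([::], [::], [::]).
Definition cA (L : seq term) k i0 j0 n : int := nth 0 (nth t0 L k).1.1 (i0 * n + j0).
Definition cB (L : seq term) k i0 j0 n : int := nth 0 (nth t0 L k).1.2 (i0 * n + j0).
Definition cC (L : seq term) k i0 j0 n : int := nth 0 (nth t0 L k).2 (i0 * n + j0).

Lemma expand (K : fieldType) (R : algType K) n (f g : 'I_n -> 'I_n -> K)
  (X Y : 'I_n -> 'I_n -> R) :
  (\sum_(i0 < n) \sum_(j0 < n) f i0 j0 *: X i0 j0) *
  (\sum_(j1 < n) \sum_(l1 < n) g j1 l1 *: Y j1 l1) =
  \sum_(i0 < n) \sum_(j0 < n) \sum_(j1 < n) \sum_(l1 < n)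
     (f i0 j0 * g j1 l1) *: (X i0 j0 * Y j1 l1).
Proof.
rewrite mulr_suml; apply: eq_bigr => i0 _; rewrite mulr_suml.
apply: eq_bigr => j0 _; rewrite mulr_sumr; apply: eq_bigr => j1 _.
rewrite mulr_sumr; apply: eq_bigr => l1 _.
by rewrite -scalerAl -scalerAr scalerA.
Qed.

Lemma idx_div n (i : 'I_n) (j : 'I_n) : ((i * n + j) %/ n)%N = i.
Proof. by rewrite divnMDl ?divn_small ?addn0 //; apply: leq_ltn_trans (ltn_ord j). Qed.
Lemma idx_mod n (i : 'I_n) (j : 'I_n) : ((i * n + j) %% n)%N = j.
Proof. by rewrite modnMDl modn_small. Qed.
Lemma idx_lt n (i : 'I_n) (j : 'I_n) : (i * n + j < n * n)%N.
Proof.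
have h1 := ltn_ord i; have h2 := ltn_ord j.
rewrite mulnC; apply: (@leq_trans (n * i + n)); first by rewrite ltn_add2l.
by rewrite addnC -mulnS leq_mul2l h1 orbT.
Qed.

Theorem check_rank (K : fieldType) n (L : seq term) :
  check n L -> mxmul_rank_le K n n n (size L).
Proof.
move=> hc.
exists (fun k => \matrix_(i, j) (cA L k i j n)%:~R).
exists (fun k => \matrix_(i, j) (cB L k i j n)%:~R).
exists (fun k => \matrix_(i, j) (cC L k i j n)%:~R).
move=> R A B i l.
under eq_bigr => k _ do rewrite expand.
under eq_bigr => k _ do rewrite GRing.scaler_sumr.
rewrite exchange_big /=.
under eq_bigr => ? _ do under eq_bigr => ? _ do rewrite GRing.scaler_sumr.
under eq_bigr => ? _ do rewrite exchange_big /=.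
under eq_bigr => ? _ do under eq_bigr => ? _ do under eq_bigr => ? _ do rewrite GRing.scaler_sumr.
under eq_bigr => ? _ do under eq_bigr => ? _ do rewrite exchange_big /=.
under eq_bigr => ? _ do under eq_bigr => ? _ do under eq_bigr => ? _ do under eq_bigr => ? _ do rewrite GRing.scaler_sumr.
under eq_bigr => ? _ do under eq_bigr => ? _ do under eq_bigr => ? _ do rewrite exchange_big /=.
under eq_bigr => ? _ do under eq_bigr => ? _ do under eq_bigr => ? _ do under eq_bigr => ? _ do under eq_bigr => ? _ do rewrite scalerA.
have coef : forall i0 j0 j1 l1 : 'I_n,
  \sum_(k < size L) ((\matrix_(i, j) (cC L k i j n)%:~R : 'M[K]_n) i l *
     ((\matrix_(i, j) (cA L k i j n)%:~R : 'M[K]_n) i0 j0 *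
      (\matrix_(i, j) (cB L k i j n)%:~R : 'M[K]_n) j1 l1)) =
  (if [&& i0 == i, j0 == j1 & l1 == l] then 1 else 0).
  move=> i0 j0 j1 l1.
  under eq_bigr do rewrite !mxE -!intrM.
  rewrite -rmorph_sum /=.
  have := check_sound hc (idx_lt i0 j0) (idx_lt j1 l1) (idx_lt i l).
  rewrite (big_nth t0) big_mkord => E.
  rewrite (eq_bigr (fun k : 'I_(size L) => cA L k i0 j0 n * cB L k j1 l1 n * cC L k i l n)); last first.
    by move=> k _; rewrite mulrC.
  rewrite /cA /cB /cC E /expv !idx_div !idx_mod !val_eqE.
  by case: (i0 == i); case: (j0 == j1); case: (l1 == l); rewrite /= ?rmorph1 ?rmorph0.
under eq_bigr do under eq_bigr do under eq_bigr do under eq_bigr do rewrite -GRing.scaler_suml coef.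
rewrite mxE [RHS](bigD1 i) //= [X in _ = _ + X]big1 ?addr0; last first.
  move=> i0 /negbTE ne; apply: big1 => j0 _; apply: big1 => j1 _; apply: big1 => l1 _.
  by rewrite ne scale0r.
apply: eq_bigr => j _.
rewrite (bigD1 j) //= [X in _ = _ + X]big1 ?addr0; last first.
  move=> j1 /negbTE ne; apply: big1 => l1 _.
  by rewrite eq_refl eq_sym ne scale0r.
rewrite (bigD1 l) //= [X in _ = _ + X]big1 ?addr0; last first.
  move=> l1 /negbTE ne.
  by rewrite !eq_refl ne scale0r.
by rewrite !eq_refl scale1r.
Qed.

Definition L7 : seq term := [::
  mk 49 [:: (0, p1); (8, p1); (16, p1); (24, p1); (32, p1); (40, p1); (48, p1)] [:: (0, p1); (8, p1); (16, p1); (24, p1); (32, p1); (40, p1); (48, p1)] [:: (0, p1); (8, p1); (16, p1); (24, p1); (32, p1); (40, p1); (48, p1)];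
  mk 49 [:: (7, p1); (8, p1); (31, p1); (32, p1); (47, p1); (48, p1)] [:: (0, p1); (16, p1); (24, p1); (40, p1)] [:: (7, p1); (8, m1); (31, p1); (32, m1); (47, p1); (48, m1)];
  mk 49 [:: (0, p1); (16, p1); (24, p1); (40, p1)] [:: (1, p1); (8, m1); (25, p1); (32, m1); (41, p1); (48, m1)] [:: (1, p1); (8, p1); (25, p1); (32, p1); (41, p1); (48, p1)];
  mk 49 [:: (8, p1); (32, p1); (48, p1)] [:: (0, m1); (7, p1); (16, m1); (24, m1); (31, p1); (40, m1); (47, p1)] [:: (0, p1); (7, p1); (16, p1); (24, p1); (31, p1); (40, p1); (47, p1)];
  mk 49 [:: (0, p1); (1, p1); (16, p1); (24, p1); (25, p1); (40, p1); (41, p1)] [:: (8, p1); (32, p1); (48, p1)] [:: (0, m1); (1, p1); (16, m1); (24, m1); (25, p1); (40, m1); (41, p1)];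
  mk 49 [:: (0, m1); (7, p1); (16, m1); (24, m1); (31, p1); (40, m1); (47, p1)] [:: (0, p1); (1, p1); (16, p1); (24, p1); (25, p1); (40, p1); (41, p1)] [:: (8, p1); (32, p1); (48, p1)];
  mk 49 [:: (1, p1); (8, m1); (25, p1); (32, m1); (41, p1); (48, m1)] [:: (7, p1); (8, p1); (31, p1); (32, p1); (47, p1); (48, p1)] [:: (0, p1); (16, p1); (24, p1); (40, p1)];
  mk 49 [:: (14, p1); (16, p1); (38, p1); (40, p1); (46, p1); (48, p1)] [:: (0, p1); (8, p1); (24, p1); (32, p1)] [:: (14, p1); (16, m1); (38, p1); (40, m1); (46, p1); (48, m1)];
  mk 49 [:: (45, p1); (46, p1); (47, p1); (48, p1)] [:: (0, p1); (24, p1)] [:: (45, p1); (46, m1); (47, m1); (48, p1)];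
  mk 49 [:: (14, p1); (16, p1); (38, p1); (40, p1)] [:: (1, p1); (8, m1); (25, p1); (32, m1)] [:: (15, p1); (39, p1); (41, m1); (46, p1); (48, m1)];
  mk 49 [:: (46, p1); (48, p1)] [:: (0, m1); (7, p1); (24, m1); (31, p1)] [:: (14, p1); (16, m1); (38, p1); (40, m1); (45, p1); (47, m1)];
  mk 49 [:: (14, p1); (15, p1); (16, p1); (38, p1); (39, p1); (40, p1); (41, p1)] [:: (8, p1); (32, p1)] [:: (14, m1); (15, p1); (16, p1); (38, m1); (39, p1); (40, p1); (41, m1)];
  mk 49 [:: (14, m1); (16, m1); (38, m1); (40, m1); (45, p1); (47, p1)] [:: (0, p1); (1, p1); (24, p1); (25, p1)] [:: (46, p1); (48, m1)];
  mk 49 [:: (15, p1); (39, p1); (41, p1); (46, m1); (48, m1)] [:: (7, p1); (8, p1); (31, p1); (32, p1)] [:: (14, p1); (16, m1); (38, p1); (40, m1)];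
  mk 49 [:: (0, p1); (8, p1); (24, p1); (32, p1)] [:: (2, p1); (16, m1); (26, p1); (34, p1); (40, m1); (48, m1)] [:: (2, p1); (16, p1); (26, p1); (34, p1); (40, p1); (48, p1)];
  mk 49 [:: (7, p1); (8, p1); (31, p1); (32, p1)] [:: (2, p1); (16, m1); (26, p1); (40, m1)] [:: (9, p1); (33, p1); (34, m1); (47, p1); (48, m1)];
  mk 49 [:: (0, p1); (24, p1)] [:: (27, p1); (34, m1); (41, m1); (48, p1)] [:: (27, p1); (34, p1); (41, p1); (48, p1)];
  mk 49 [:: (8, p1); (32, p1)] [:: (2, m1); (9, p1); (16, p1); (26, m1); (33, p1); (40, p1); (47, m1)] [:: (2, p1); (9, p1); (16, p1); (26, p1); (33, p1); (40, p1); (47, p1)];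
  mk 49 [:: (0, p1); (1, p1); (24, p1); (25, p1)] [:: (34, p1); (48, m1)] [:: (2, m1); (16, m1); (26, m1); (27, p1); (40, m1); (41, p1)];
  mk 49 [:: (0, m1); (7, p1); (24, m1); (31, p1)] [:: (2, p1); (16, m1); (26, p1); (27, p1); (40, m1); (41, m1)] [:: (34, p1); (48, p1)];
  mk 49 [:: (1, p1); (8, m1); (25, p1); (32, m1)] [:: (9, p1); (33, p1); (34, p1); (47, m1); (48, m1)] [:: (2, p1); (16, p1); (26, p1); (40, p1)];
  mk 49 [:: (16, p1); (40, p1); (48, p1)] [:: (0, m1); (8, m1); (14, p1); (24, m1); (32, m1); (38, p1); (46, p1)] [:: (0, p1); (8, p1); (14, p1); (24, p1); (32, p1); (38, p1); (46, p1)];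
  mk 49 [:: (47, p1); (48, p1)] [:: (0, m1); (14, p1); (24, m1); (38, p1)] [:: (7, p1); (8, m1); (31, p1); (32, m1); (45, p1); (46, m1)];
  mk 49 [:: (16, p1); (40, p1)] [:: (1, m1); (8, p1); (15, p1); (25, m1); (32, p1); (39, p1); (46, m1)] [:: (1, p1); (8, p1); (15, p1); (25, p1); (32, p1); (39, p1); (46, p1)];
  mk 49 [:: (48, p1)] [:: (0, p1); (7, m1); (14, m1); (24, p1); (31, m1); (38, m1); (45, p1)] [:: (0, p1); (7, p1); (14, p1); (24, p1); (31, p1); (38, p1); (45, p1)];
  mk 49 [:: (16, p1); (40, p1); (41, p1)] [:: (8, m1); (32, m1); (46, p1)] [:: (0, m1); (1, p1); (14, m1); (15, p1); (24, m1); (25, p1); (38, m1); (39, p1)];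
  mk 49 [:: (16, m1); (40, m1); (47, p1)] [:: (0, m1); (1, m1); (14, p1); (15, p1); (24, m1); (25, m1); (38, p1); (39, p1)] [:: (8, p1); (32, p1); (46, p1)];
  mk 49 [:: (41, p1); (48, m1)] [:: (7, m1); (8, m1); (31, m1); (32, m1); (45, p1); (46, p1)] [:: (0, p1); (14, p1); (24, p1); (38, p1)];
  mk 49 [:: (0, p1); (2, p1); (8, p1); (24, p1); (26, p1); (32, p1); (34, p1)] [:: (16, p1); (40, p1); (48, p1)] [:: (0, m1); (2, p1); (8, m1); (24, m1); (26, p1); (32, m1); (34, p1)];
  mk 49 [:: (7, p1); (8, p1); (9, p1); (31, p1); (32, p1); (33, p1); (34, p1)] [:: (16, p1); (40, p1)] [:: (7, m1); (8, p1); (9, p1); (31, m1); (32, p1); (33, p1); (34, m1)];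
  mk 49 [:: (0, p1); (2, p1); (24, p1); (26, p1)] [:: (41, p1); (48, m1)] [:: (1, m1); (8, m1); (25, m1); (27, p1); (32, m1); (34, p1)];
  mk 49 [:: (8, p1); (32, p1); (34, p1)] [:: (16, m1); (40, m1); (47, p1)] [:: (0, m1); (2, p1); (7, m1); (9, p1); (24, m1); (26, p1); (31, m1); (33, p1)];
  mk 49 [:: (0, p1); (1, p1); (2, p1); (24, p1); (25, p1); (26, p1); (27, p1)] [:: (48, p1)] [:: (0, p1); (1, m1); (2, m1); (24, p1); (25, m1); (26, m1); (27, p1)];
  mk 49 [:: (0, m1); (2, m1); (7, p1); (9, p1); (24, m1); (26, m1); (31, p1); (33, p1)] [:: (16, p1); (40, p1); (41, p1)] [:: (8, m1); (32, m1); (34, p1)];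
  mk 49 [:: (1, p1); (8, m1); (25, p1); (27, p1); (32, m1); (34, m1)] [:: (47, p1); (48, p1)] [:: (0, m1); (2, p1); (24, m1); (26, p1)];
  mk 49 [:: (0, m1); (8, m1); (14, p1); (24, m1); (32, m1); (38, p1); (46, p1)] [:: (0, p1); (2, p1); (8, p1); (24, p1); (26, p1); (32, p1); (34, p1)] [:: (16, p1); (40, p1); (48, p1)];
  mk 49 [:: (7, m1); (8, m1); (31, m1); (32, m1); (45, p1); (46, p1)] [:: (0, p1); (2, p1); (24, p1); (26, p1)] [:: (47, p1); (48, m1)];
  mk 49 [:: (0, m1); (14, p1); (24, m1); (38, p1)] [:: (1, p1); (8, m1); (25, p1); (27, p1); (32, m1); (34, m1)] [:: (41, p1); (48, p1)];
  mk 49 [:: (8, m1); (32, m1); (46, p1)] [:: (0, m1); (2, m1); (7, p1); (9, p1); (24, m1); (26, m1); (31, p1); (33, p1)] [:: (16, p1); (40, p1); (47, p1)];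
  mk 49 [:: (0, m1); (1, m1); (14, p1); (15, p1); (24, m1); (25, m1); (38, p1); (39, p1)] [:: (8, p1); (32, p1); (34, p1)] [:: (16, m1); (40, m1); (41, p1)];
  mk 49 [:: (0, p1); (7, m1); (14, m1); (24, p1); (31, m1); (38, m1); (45, p1)] [:: (0, p1); (1, p1); (2, p1); (24, p1); (25, p1); (26, p1); (27, p1)] [:: (48, p1)];
  mk 49 [:: (1, m1); (8, p1); (15, p1); (25, m1); (32, p1); (39, p1); (46, m1)] [:: (7, p1); (8, p1); (9, p1); (31, p1); (32, p1); (33, p1); (34, p1)] [:: (16, p1); (40, p1)];
  mk 49 [:: (2, p1); (16, m1); (26, p1); (34, p1); (40, m1); (48, m1)] [:: (14, p1); (16, p1); (38, p1); (40, p1); (46, p1); (48, p1)] [:: (0, p1); (8, p1); (24, p1); (32, p1)];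
  mk 49 [:: (9, p1); (33, p1); (34, p1); (47, m1); (48, m1)] [:: (14, p1); (16, p1); (38, p1); (40, p1)] [:: (7, p1); (8, m1); (31, p1); (32, m1)];
  mk 49 [:: (2, p1); (16, m1); (26, p1); (40, m1)] [:: (15, p1); (39, p1); (41, p1); (46, m1); (48, m1)] [:: (1, p1); (8, p1); (25, p1); (32, p1)];
  mk 49 [:: (34, p1); (48, m1)] [:: (14, m1); (16, m1); (38, m1); (40, m1); (45, p1); (47, p1)] [:: (0, p1); (7, p1); (24, p1); (31, p1)];
  mk 49 [:: (2, p1); (16, m1); (26, p1); (27, p1); (40, m1); (41, m1)] [:: (46, p1); (48, p1)] [:: (0, m1); (1, p1); (24, m1); (25, p1)];
  mk 49 [:: (2, m1); (9, p1); (16, p1); (26, m1); (33, p1); (40, p1); (47, m1)] [:: (14, p1); (15, p1); (16, p1); (38, p1); (39, p1); (40, p1); (41, p1)] [:: (8, p1); (32, p1)];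
  mk 49 [:: (27, p1); (34, m1); (41, m1); (48, p1)] [:: (45, p1); (46, p1); (47, p1); (48, p1)] [:: (0, p1); (24, p1)];
  mk 49 [:: (35, p1); (36, m1); (38, p1); (39, m1)] [:: (9, p1); (16, m1)] [:: (35, p1); (37, m1); (38, m1); (40, p1); (42, p1); (44, m1); (45, m1); (47, p1)];
  mk 49 [:: (29, p1); (32, p1); (36, p1); (39, p1)] [:: (7, p1); (8, p1); (9, p1); (14, m1); (15, m1); (16, m1)] [:: (36, p1); (39, m1); (43, p1); (46, m1)];
  mk 49 [:: (21, m1); (22, (2%:Z)); (23, p1); (24, m1); (25, (2%:Z)); (26, p1); (43, m1); (44, m1); (46, m1); (47, m1)] [:: (0, p1); (2, p1); (16, p1)] [:: (21, m1); (22, p1); (24, p1); (25, m1); (44, m1); (47, p1)];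
  mk 49 [:: (21, m1); (22, p1); (24, m1); (25, p1)] [:: (2, p1); (16, p1)] [:: (21, p1); (22, m1); (23, m1); (24, m1); (25, p1); (26, p1); (30, m1); (33, p1)];
  mk 49 [:: (35, m1); (36, p1); (38, m1); (39, p1); (42, p1); (43, m1); (45, p1); (46, m1)] [:: (0, m1)] [:: (28, p1); (29, m1); (31, m1); (32, p1); (42, m1); (43, p1); (44, p1); (45, p1); (46, m1); (47, m1)];
  mk 49 [:: (36, m1); (37, m1); (39, m1); (40, m1)] [:: (0, m1); (1, m1); (7, m1); (8, m1)] [:: (22, m1); (23, p1); (25, p1); (26, m1); (28, m1); (30, p1); (31, p1); (33, m1); (35, p1); (37, m1); (38, m1); (40, p1); (44, p1); (47, m1)];
  mk 49 [:: (22, p1); (25, p1); (35, p1); (38, p1)] [:: (2, m1); (9, m1); (16, p1)] [:: (30, p1); (33, m1); (37, m1); (40, p1)];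
  mk 49 [:: (28, m1); (29, (2%:Z)); (30, p1); (31, m1); (32, (2%:Z)); (33, p1); (36, p1); (37, p1); (39, p1); (40, p1)] [:: (0, m1); (1, m1)] [:: (29, p1); (30, m1); (32, m1); (33, p1); (43, m1); (46, p1)];
  mk 49 [:: (22, m1); (25, m1); (43, p1); (46, p1)] [:: (7, m1); (9, m1); (14, p1); (16, p1)] [:: (35, m1); (36, p1); (38, p1); (39, m1); (42, m1); (43, p1); (45, p1); (46, m1)];
  mk 49 [:: (23, p1); (26, p1); (29, m1); (30, m1); (32, m1); (33, m1); (36, m1); (37, m1); (39, m1); (40, m1)] [:: (14, m1); (15, m1); (16, m1)] [:: (22, m1); (25, p1)];
  mk 49 [:: (22, m1); (25, m1)] [:: (0, p1); (1, p1); (2, p1); (7, p1); (8, p1); (9, p1)] [:: (21, p1); (22, m1); (23, m1); (24, m1); (25, p1); (26, p1); (30, m1); (33, p1); (35, p1); (36, m1); (37, p1); (38, m1); (39, p1); (40, m1); (42, p1); (43, m1); (44, m1); (45, m1); (46, p1); (47, p1)];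
  mk 49 [:: (28, m1); (29, (2%:Z)); (30, p1); (31, m1); (32, (2%:Z)); (33, p1); (35, p1); (38, p1); (42, m1); (43, p1); (44, p1); (45, m1); (46, p1); (47, p1)] [:: (15, p1)] [:: (43, p1); (46, m1)];
  mk 49 [:: (21, p1); (22, m1); (23, m1); (24, p1); (25, m1); (26, m1); (42, m1); (43, p1); (44, p1); (45, m1); (46, p1); (47, p1)] [:: (0, m1); (2, m1)] [:: (44, p1); (47, m1)];
  mk 49 [:: (29, m1); (32, m1); (36, m1); (37, m1); (39, m1); (40, m1)] [:: (0, m1); (1, m1); (7, m1); (8, m1); (14, p1); (15, p1)] [:: (29, p1); (32, m1); (36, m1); (39, p1); (43, m1); (46, p1)];
  mk 49 [:: (22, m1); (25, m1); (35, p1); (36, m1); (38, p1); (39, m1); (43, p1); (46, p1)] [:: (0, p1); (9, m1); (16, p1)] [:: (35, p1); (36, m1); (38, m1); (39, p1); (42, p1); (43, m1); (44, m1); (45, m1); (46, p1); (47, p1)];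
  mk 49 [:: (28, m1); (29, (2%:Z)); (31, m1); (32, (2%:Z)); (35, p1); (38, p1); (42, m1); (45, m1)] [:: (1, p1); (15, p1)] [:: (28, p1); (29, m1); (31, m1); (32, p1)];
  mk 49 [:: (29, m1); (30, m1); (32, m1); (33, m1); (36, m1); (37, m1); (39, m1); (40, m1)] [:: (0, m1); (1, m1); (14, m1); (15, m1)] [:: (22, p1); (25, m1); (28, p1); (31, m1)];
  mk 49 [:: (21, p1); (22, m1); (24, p1); (25, m1); (28, m1); (31, m1); (35, m1); (38, m1)] [:: (0, p1); (1, p1); (2, p1)] [:: (30, m1); (33, p1)];
  mk 49 [:: (43, p1); (44, p1); (46, p1); (47, p1)] [:: (14, p1)] [:: (21, p1); (22, m1); (24, m1); (25, p1); (42, p1); (45, m1)];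
  mk 49 [:: (37, m1); (40, m1); (43, m1); (46, m1)] [:: (0, p1); (1, p1); (7, p1); (8, p1); (14, m1)] [:: (28, m1); (29, p1); (31, p1); (32, m1); (35, p1); (36, m1); (38, m1); (39, p1); (43, m1); (46, p1)];
  mk 49 [:: (22, p1); (25, p1)] [:: (0, (2%:Z)); (1, p1); (2, p1); (7, (2%:Z)); (8, p1); (9, p1); (14, m1)] [:: (21, p1); (22, m1); (24, m1); (25, p1); (35, p1); (36, m1); (38, m1); (39, p1); (42, p1); (43, m1); (45, m1); (46, p1)];
  mk 49 [:: (22, p1); (23, p1); (25, p1); (26, p1); (43, m1); (44, m1); (46, m1); (47, m1)] [:: (0, p1); (2, p1); (14, p1); (16, p1)] [:: (21, p1); (22, m1); (24, m1); (25, p1)];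
  mk 49 [:: (28, m1); (29, (2%:Z)); (30, p1); (31, m1); (32, (2%:Z)); (33, p1); (35, p1); (37, p1); (38, p1); (40, p1); (42, m1); (43, p1); (45, m1); (46, p1)] [:: (0, m1); (1, m1); (15, m1)] [:: (28, p1); (29, m1); (31, m1); (32, p1); (43, p1); (46, m1)];
  mk 49 [:: (21, m1); (22, p1); (24, m1); (25, p1); (29, p1); (30, p1); (32, p1); (33, p1); (36, p1); (37, p1); (39, p1); (40, p1)] [:: (0, m1); (1, m1); (16, p1)] [:: (22, p1); (25, m1); (30, p1); (33, m1)];
  mk 49 [:: (22, m1); (25, m1); (36, m1); (37, m1); (39, m1); (40, m1)] [:: (0, m1); (1, m1); (7, m1); (8, m1); (16, m1)] [:: (22, p1); (23, m1); (25, m1); (26, p1); (30, m1); (33, p1); (37, p1); (40, m1); (44, m1); (47, p1)];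
  mk 49 [:: (36, m1); (39, m1); (43, p1); (46, p1)] [:: (1, m1); (8, m1)] [:: (28, p1); (29, m1); (31, m1); (32, p1); (35, m1); (36, p1); (38, p1); (39, m1)];
  mk 49 [:: (21, p1); (22, (- 2%:Z)); (23, m1); (24, p1); (25, (- 2%:Z)); (26, m1); (36, m1); (37, m1); (39, m1); (40, m1)] [:: (16, p1)] [:: (22, p1); (23, m1); (25, m1); (26, p1); (44, m1); (47, p1)];
  mk 49 [:: (29, p1); (32, p1); (36, p1); (39, p1); (43, m1); (46, m1)] [:: (0, p1); (1, m1); (7, p1); (14, m1); (15, m1)] [:: (28, p1); (29, m1); (31, m1); (32, p1)];
  mk 49 [:: (29, m1); (32, m1); (35, m1); (38, m1)] [:: (0, p1); (1, p1); (9, m1); (16, p1)] [:: (30, p1); (33, m1); (36, m1); (39, p1); (43, m1); (46, p1)];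
  mk 49 [:: (9, p1); (16, m1)] [:: (5, p1); (6, p1); (19, m1); (20, m1); (26, m1); (27, m1); (40, p1); (41, p1)] [:: (5, p1); (12, m1); (26, p1); (33, m1)];
  mk 49 [:: (7, p1); (8, p1); (9, p1); (14, m1); (15, m1); (16, m1)] [:: (12, p1); (13, p1); (33, m1); (34, m1)] [:: (11, p1); (12, p1); (32, p1); (33, p1)];
  mk 49 [:: (0, p1); (2, p1); (16, p1)] [:: (3, m1); (10, p1); (20, m1); (24, p1); (31, m1); (41, p1)] [:: (3, m1); (10, (2%:Z)); (13, m1); (17, p1); (20, m1); (24, m1); (31, (2%:Z)); (34, m1); (38, p1); (41, m1)];
  mk 49 [:: (2, p1); (16, p1)] [:: (3, p1); (10, m1); (17, m1); (18, m1); (24, m1); (31, p1); (38, p1); (39, p1)] [:: (3, m1); (10, p1); (24, m1); (31, p1)];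
  mk 49 [:: (0, m1)] [:: (4, p1); (6, m1); (11, m1); (13, p1); (20, p1); (25, m1); (27, p1); (32, p1); (34, m1); (41, m1)] [:: (5, m1); (6, p1); (12, p1); (13, m1); (26, m1); (27, p1); (33, p1); (34, m1)];
  mk 49 [:: (0, m1); (1, m1); (7, m1); (8, m1)] [:: (4, m1); (5, p1); (10, m1); (17, p1); (18, p1); (19, m1); (20, p1); (25, p1); (26, m1); (31, p1); (38, m1); (39, m1); (40, p1); (41, m1)] [:: (12, m1); (19, m1); (33, m1); (40, m1)];
  mk 49 [:: (2, m1); (9, m1); (16, p1)] [:: (18, p1); (19, m1); (39, m1); (40, p1)] [:: (5, p1); (10, p1); (26, p1); (31, p1)];
  mk 49 [:: (0, m1); (1, m1)] [:: (11, p1); (13, m1); (18, m1); (32, m1); (34, p1); (39, p1)] [:: (4, m1); (11, (2%:Z)); (12, p1); (18, p1); (19, p1); (25, m1); (32, (2%:Z)); (33, p1); (39, p1); (40, p1)];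
  mk 49 [:: (7, m1); (9, m1); (14, p1); (16, p1)] [:: (5, m1); (6, m1); (12, p1); (13, p1); (26, p1); (27, p1); (33, m1); (34, m1)] [:: (10, m1); (13, p1); (31, m1); (34, p1)];
  mk 49 [:: (14, m1); (15, m1); (16, m1)] [:: (10, m1); (31, p1)] [:: (11, m1); (12, m1); (17, p1); (18, m1); (19, m1); (32, m1); (33, m1); (38, p1); (39, m1); (40, m1)];
  mk 49 [:: (0, p1); (1, p1); (2, p1); (7, p1); (8, p1); (9, p1)] [:: (3, p1); (5, p1); (6, p1); (10, m1); (12, m1); (13, m1); (17, m1); (18, m1); (19, p1); (20, m1); (24, m1); (26, m1); (27, m1); (31, p1); (33, p1); (34, p1); (38, p1); (39, p1); (40, m1); (41, p1)] [:: (10, m1); (31, m1)];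
  mk 49 [:: (15, p1)] [:: (13, p1); (34, m1)] [:: (4, m1); (5, p1); (6, m1); (11, (2%:Z)); (13, p1); (18, p1); (20, p1); (25, m1); (26, p1); (27, m1); (32, (2%:Z)); (34, p1); (39, p1); (41, p1)];
  mk 49 [:: (0, m1); (2, m1)] [:: (20, p1); (41, m1)] [:: (3, p1); (6, m1); (10, m1); (13, p1); (17, m1); (20, p1); (24, p1); (27, m1); (31, m1); (34, p1); (38, m1); (41, p1)];
  mk 49 [:: (0, m1); (1, m1); (7, m1); (8, m1); (14, p1); (15, p1)] [:: (11, p1); (12, m1); (13, m1); (32, m1); (33, p1); (34, p1)] [:: (11, m1); (12, m1); (19, m1); (32, m1); (33, m1); (40, m1)];
  mk 49 [:: (0, p1); (9, m1); (16, p1)] [:: (5, p1); (6, p1); (12, m1); (13, m1); (20, m1); (26, m1); (27, m1); (33, p1); (34, p1); (41, p1)] [:: (5, p1); (10, m1); (12, m1); (13, p1); (26, p1); (31, m1); (33, m1); (34, p1)];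
  mk 49 [:: (1, p1); (15, p1)] [:: (4, p1); (11, m1); (25, m1); (32, p1)] [:: (4, m1); (5, p1); (6, m1); (11, (2%:Z)); (25, m1); (26, p1); (27, m1); (32, (2%:Z))];
  mk 49 [:: (0, m1); (1, m1); (14, m1); (15, m1)] [:: (4, p1); (10, p1); (25, m1); (31, m1)] [:: (11, m1); (12, m1); (18, m1); (19, m1); (32, m1); (33, m1); (39, m1); (40, m1)];
  mk 49 [:: (0, p1); (1, p1); (2, p1)] [:: (18, m1); (39, p1)] [:: (3, p1); (4, m1); (5, m1); (10, m1); (24, p1); (25, m1); (26, m1); (31, m1)];
  mk 49 [:: (14, p1)] [:: (3, p1); (6, p1); (10, m1); (24, m1); (27, m1); (31, p1)] [:: (13, p1); (20, p1); (34, p1); (41, p1)];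
  mk 49 [:: (0, p1); (1, p1); (7, p1); (8, p1); (14, m1)] [:: (4, m1); (5, p1); (11, p1); (12, m1); (13, m1); (25, p1); (26, m1); (32, m1); (33, p1); (34, p1)] [:: (13, m1); (19, m1); (34, m1); (40, m1)];
  mk 49 [:: (0, (2%:Z)); (1, p1); (2, p1); (7, (2%:Z)); (8, p1); (9, p1); (14, m1)] [:: (3, p1); (5, p1); (6, p1); (10, m1); (12, m1); (13, m1); (24, m1); (26, m1); (27, m1); (31, p1); (33, p1); (34, p1)] [:: (10, p1); (31, p1)];
  mk 49 [:: (0, p1); (2, p1); (14, p1); (16, p1)] [:: (3, p1); (10, m1); (24, m1); (31, p1)] [:: (10, p1); (13, m1); (17, p1); (20, m1); (31, p1); (34, m1); (38, p1); (41, m1)];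
  mk 49 [:: (0, m1); (1, m1); (15, m1)] [:: (4, p1); (11, m1); (13, p1); (25, m1); (32, p1); (34, m1)] [:: (4, m1); (5, p1); (6, m1); (11, (2%:Z)); (13, p1); (18, p1); (19, p1); (25, m1); (26, p1); (27, m1); (32, (2%:Z)); (34, p1); (39, p1); (40, p1)];
  mk 49 [:: (0, m1); (1, m1); (16, p1)] [:: (10, p1); (18, p1); (31, m1); (39, m1)] [:: (3, m1); (10, p1); (11, p1); (12, p1); (18, p1); (19, p1); (24, m1); (31, p1); (32, p1); (33, p1); (39, p1); (40, p1)];
  mk 49 [:: (0, m1); (1, m1); (7, m1); (8, m1); (16, m1)] [:: (10, p1); (17, m1); (18, m1); (19, p1); (20, m1); (31, m1); (38, p1); (39, p1); (40, m1); (41, p1)] [:: (10, m1); (12, m1); (19, m1); (31, m1); (33, m1); (40, m1)];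
  mk 49 [:: (1, m1); (8, m1)] [:: (4, p1); (5, m1); (11, m1); (12, p1); (25, m1); (26, p1); (32, p1); (33, m1)] [:: (12, m1); (13, p1); (33, m1); (34, p1)];
  mk 49 [:: (16, p1)] [:: (10, p1); (17, m1); (20, m1); (31, m1); (38, p1); (41, p1)] [:: (3, p1); (10, (- 2%:Z)); (12, m1); (17, m1); (19, m1); (24, p1); (31, (- 2%:Z)); (33, m1); (38, m1); (40, m1)];
  mk 49 [:: (0, p1); (1, m1); (7, p1); (14, m1); (15, m1)] [:: (4, p1); (11, m1); (25, m1); (32, p1)] [:: (11, p1); (12, p1); (13, m1); (32, p1); (33, p1); (34, m1)];
  mk 49 [:: (0, p1); (1, p1); (9, m1); (16, p1)] [:: (12, m1); (13, m1); (18, p1); (33, p1); (34, p1); (39, m1)] [:: (5, m1); (11, m1); (26, m1); (32, m1)];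
  mk 49 [:: (31, p1)] [:: (1, m1); (2, m1); (8, p1); (9, p1); (22, p1); (23, p1); (29, m1); (30, m1)] [:: (9, p1); (16, m1); (30, p1); (37, m1)];
  mk 49 [:: (27, p1); (41, p1); (48, p1)] [:: (2, m1); (7, m1); (14, m1); (23, p1); (28, p1); (35, p1); (42, p1); (43, p1); (44, p1)] [:: (42, p1); (43, m1); (44, p1)];
  mk 49 [:: (31, p1); (32, p1); (46, p1)] [:: (8, m1); (9, m1); (15, m1); (16, m1); (29, p1); (30, p1); (36, p1); (37, p1)] [:: (7, p1); (9, p1); (28, p1); (30, p1)];
  mk 49 [:: (38, p1); (39, p1); (45, p1)] [:: (0, m1); (1, m1); (21, p1); (22, p1)] [:: (2, m1); (14, p1); (16, p1); (23, m1); (35, p1); (37, p1)];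
  mk 49 [:: (25, p1); (26, m1); (32, p1); (33, m1); (34, p1); (39, p1); (40, m1); (46, p1); (47, m1)] [:: (8, p1); (15, p1); (16, p1); (29, m1); (36, m1); (37, m1)] [:: (7, p1); (8, m1); (9, p1); (28, p1); (29, m1); (30, p1)];
  mk 49 [:: (24, p1); (25, p1); (27, m1); (38, p1); (39, p1); (41, m1); (45, p1); (46, p1); (48, m1)] [:: (8, m1); (9, m1); (15, m1); (16, m1); (29, p1); (30, p1); (36, p1); (37, p1)] [:: (2, p1); (23, p1)];
  mk 49 [:: (46, p1); (47, m1)] [:: (15, p1); (36, m1); (43, m1)] [:: (2, m1); (7, p1); (8, m1); (15, m1); (16, p1); (23, m1); (28, p1); (29, m1); (36, m1); (37, p1); (43, p1)];
  mk 49 [:: (41, p1); (46, m1); (48, p1)] [:: (42, m1); (43, m1)] [:: (0, p1); (21, p1); (42, m1)];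
  mk 49 [:: (41, p1); (46, m1); (47, p1)] [:: (14, m1); (35, p1); (43, m1)] [:: (0, m1); (1, p1); (2, m1); (15, m1); (16, p1); (21, m1); (22, p1); (23, m1); (36, m1); (37, p1); (42, p1)];
  mk 49 [:: (41, p1)] [:: (0, m1); (2, p1); (14, m1); (21, p1); (23, m1); (35, p1); (42, p1); (43, m1); (44, m1)] [:: (14, p1); (35, p1); (42, m1)];
  mk 49 [:: (45, p1)] [:: (1, m1); (2, m1); (22, p1); (23, p1); (43, p1); (44, p1)] [:: (2, p1); (14, m1); (16, m1); (23, p1); (35, m1); (37, m1); (43, p1)];
  mk 49 [:: (32, p1); (34, m1); (39, p1)] [:: (7, m1); (9, p1); (15, p1); (16, p1); (28, p1); (30, m1); (36, m1); (37, m1)] [:: (7, p1); (28, p1)];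
  mk 49 [:: (24, p1); (25, p1); (26, m1); (41, m1); (46, p1); (47, m1)] [:: (14, p1); (35, m1)] [:: (0, p1); (1, m1); (2, p1); (14, m1); (15, p1); (16, m1); (21, p1); (22, m1); (23, p1); (35, m1); (36, p1); (37, m1)];
  mk 49 [:: (24, m1); (27, p1); (31, m1); (38, m1); (41, p1); (45, m1); (48, p1)] [:: (2, p1); (8, m1); (9, m1); (15, m1); (16, m1); (23, m1); (29, p1); (30, p1); (36, p1); (37, p1)] [:: (2, p1); (23, p1)];
  mk 49 [:: (34, p1); (46, m1); (47, p1)] [:: (16, m1); (37, p1); (43, m1)] [:: (2, m1); (7, p1); (8, m1); (23, m1); (28, p1); (29, m1); (44, p1)];
  mk 49 [:: (27, p1); (41, p1); (46, m1); (47, p1)] [:: (43, m1)] [:: (0, p1); (1, m1); (2, p1); (21, p1); (22, m1); (23, p1); (42, m1); (43, p1); (44, m1)];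
  mk 49 [:: (46, p1)] [:: (7, p1); (8, p1); (14, p1); (15, p1); (28, m1); (29, m1); (35, m1); (36, m1); (42, m1); (43, m1)] [:: (2, p1); (7, p1); (9, p1); (23, p1); (28, p1); (30, p1); (43, m1)];
  mk 49 [:: (31, p1); (39, m1)] [:: (0, m1); (1, m1); (8, p1); (9, p1); (15, p1); (16, p1); (21, p1); (22, p1); (29, m1); (30, m1); (36, m1); (37, m1)] [:: (2, m1); (7, p1); (16, p1); (23, m1); (28, p1); (37, p1)];
  mk 49 [:: (25, m1); (26, p1); (39, m1); (40, p1); (46, m1); (47, p1)] [:: (1, m1); (8, p1); (22, p1); (29, m1)] [:: (1, p1); (2, m1); (7, p1); (8, m1); (9, p1); (22, p1); (23, m1); (28, p1); (29, m1); (30, p1)];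
  mk 49 [:: (41, p1); (45, p1)] [:: (0, p1); (2, m1); (21, m1); (23, p1); (43, p1); (44, p1)] [:: (2, m1); (14, p1); (16, p1); (23, m1); (35, p1); (37, p1); (42, m1)];
  mk 49 [:: (39, p1)] [:: (0, m1); (1, m1); (7, p1); (14, p1); (21, p1); (22, p1); (28, m1); (35, m1)] [:: (7, p1); (14, m1); (28, p1); (35, m1)];
  mk 49 [:: (24, m1); (25, m1); (26, p1); (38, m1); (39, m1); (40, p1); (46, m1); (47, p1)] [:: (1, p1); (22, m1)] [:: (2, p1); (14, m1); (15, p1); (16, m1); (23, p1); (35, m1); (36, p1); (37, m1)];
  mk 49 [:: (27, m1); (41, m1); (45, p1); (48, m1)] [:: (2, m1); (23, p1); (43, p1); (44, p1)] [:: (2, m1); (23, m1); (42, p1); (43, m1); (44, p1)];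
  mk 49 [:: (24, p1); (25, p1); (27, m1); (41, m1); (46, p1); (48, m1)] [:: (0, m1); (14, m1); (21, p1); (35, p1)] [:: (0, p1); (21, p1)];
  mk 49 [:: (34, p1)] [:: (7, p1); (9, m1); (14, p1); (16, (- 2%:Z)); (28, m1); (30, p1); (35, m1); (37, (2%:Z)); (42, m1); (43, m1); (44, p1)] [:: (2, p1); (9, p1); (23, p1); (30, p1); (44, m1)];
  mk 49 [:: (38, p1); (39, p1); (40, m1); (41, m1)] [:: (15, m1); (16, m1); (36, p1); (37, p1)] [:: (2, p1); (16, m1); (23, p1); (37, m1)];
  mk 49 [:: (25, p1); (27, m1); (41, m1); (46, p1); (48, m1)] [:: (0, p1); (7, m1); (21, m1); (28, p1)] [:: (0, p1); (21, p1)];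
  mk 49 [:: (34, m1); (46, m1)] [:: (7, p1); (9, m1); (14, p1); (16, m1); (28, m1); (30, p1); (35, m1); (37, p1); (42, m1); (43, m1)] [:: (2, p1); (7, p1); (9, p1); (23, p1); (28, p1); (30, p1); (44, m1)];
  mk 49 [:: (34, p1); (45, m1); (48, p1)] [:: (43, m1); (44, m1)] [:: (2, p1); (23, p1); (44, m1)];
  mk 49 [:: (24, p1); (25, p1); (26, m1); (39, p1); (40, m1); (46, p1); (47, m1)] [:: (1, m1); (14, p1); (22, p1); (35, m1)] [:: (1, p1); (2, m1); (14, p1); (15, m1); (16, p1); (22, p1); (23, m1); (35, p1); (36, m1); (37, p1)];
  mk 49 [:: (33, p1); (34, m1); (40, p1); (46, m1); (47, p1)] [:: (14, p1); (15, p1); (35, m1); (36, m1)] [:: (1, p1); (2, m1); (15, m1); (16, p1); (22, p1); (23, m1); (36, m1); (37, p1)];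
  mk 49 [:: (33, p1); (34, m1)] [:: (8, m1); (15, m1); (29, p1); (36, p1)] [:: (1, p1); (2, m1); (8, p1); (9, m1); (15, m1); (16, p1); (22, p1); (23, m1); (29, p1); (30, m1); (36, m1); (37, p1)];
  mk 49 [:: (27, p1); (41, p1); (46, m1); (48, p1)] [:: (7, m1); (14, m1); (28, p1); (35, p1); (42, p1); (43, p1)] [:: (0, p1); (21, p1); (42, m1); (43, p1); (44, m1)];
  mk 49 [:: (25, p1); (26, m1); (31, m1); (39, p1); (40, m1); (46, p1); (47, m1)] [:: (1, m1); (15, m1); (16, m1); (22, p1); (36, p1); (37, p1)] [:: (2, m1); (7, p1); (8, m1); (9, p1); (23, m1); (28, p1); (29, m1); (30, p1)];
  mk 49 [:: (31, m1); (32, m1); (33, p1); (46, m1); (47, p1)] [:: (15, p1); (16, p1); (36, m1); (37, m1)] [:: (7, p1); (8, m1); (28, p1); (29, m1)];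
  mk 49 [:: (31, p1); (38, p1); (41, m1)] [:: (0, m1); (2, p1); (15, p1); (16, p1); (21, p1); (23, m1); (36, m1); (37, m1)] [:: (2, p1); (16, m1); (23, p1); (37, m1)];
  mk 49 [:: (33, p1); (34, m1); (39, p1)] [:: (8, p1); (14, m1); (29, m1); (35, p1)] [:: (1, p1); (2, m1); (7, p1); (15, m1); (16, p1); (22, p1); (23, m1); (28, p1); (36, m1); (37, p1)];
  mk 49 [:: (26, p1); (40, p1); (46, m1); (47, p1)] [:: (8, m1); (15, m1); (29, p1); (36, p1)] [:: (1, p1); (2, m1); (22, p1); (23, m1)];
  mk 49 [:: (15, p1); (16, m1); (18, p1); (19, m1)] [:: (31, p1)] [:: (7, m1); (8, p1); (10, p1); (11, m1); (14, m1); (15, p1); (17, p1); (18, m1)];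
  mk 49 [:: (6, p1); (13, m1); (20, p1)] [:: (27, p1); (41, p1); (48, p1)] [:: (1, m1); (2, m1); (4, p1); (5, p1); (6, p1); (13, p1); (14, m1); (17, p1); (20, p1)];
  mk 49 [:: (1, p1); (4, p1); (15, p1); (18, p1)] [:: (31, p1); (32, p1); (46, p1)] [:: (8, m1); (9, m1); (11, p1); (12, p1); (15, m1); (16, m1); (18, p1); (19, p1)];
  mk 49 [:: (2, p1); (5, p1); (14, m1); (16, p1); (17, m1); (19, p1)] [:: (38, p1); (39, p1); (45, p1)] [:: (0, m1); (3, p1); (7, m1); (10, p1)];
  mk 49 [:: (1, p1); (4, p1); (8, m1); (11, m1); (15, p1); (18, p1)] [:: (25, p1); (26, m1); (32, p1); (33, m1); (34, p1); (39, p1); (40, m1); (46, p1); (47, m1)] [:: (8, p1); (9, p1); (11, m1); (12, m1); (16, p1); (19, m1)];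
  mk 49 [:: (14, p1); (17, p1)] [:: (24, p1); (25, p1); (27, m1); (38, p1); (39, p1); (41, m1); (45, p1); (46, p1); (48, m1)] [:: (8, m1); (9, m1); (11, p1); (12, p1); (15, m1); (16, m1); (18, p1); (19, p1)];
  mk 49 [:: (1, p1); (4, p1); (8, m1); (9, m1); (11, m1); (12, m1); (13, p1); (14, m1); (16, p1); (17, m1); (19, p1)] [:: (46, p1); (47, m1)] [:: (9, p1); (12, m1); (13, m1)];
  mk 49 [:: (0, p1); (3, p1); (6, m1)] [:: (41, p1); (46, m1); (48, p1)] [:: (6, m1); (13, m1)];
  mk 49 [:: (0, m1); (3, m1); (6, p1); (7, p1); (9, m1); (10, p1); (12, m1); (14, m1); (16, p1); (17, m1); (19, p1)] [:: (41, p1); (46, m1); (47, p1)] [:: (2, m1); (5, p1); (13, m1)];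
  mk 49 [:: (2, p1); (5, p1); (6, m1)] [:: (41, p1)] [:: (0, m1); (2, m1); (3, p1); (5, p1); (6, p1); (13, m1); (14, p1); (17, m1); (20, m1)];
  mk 49 [:: (2, m1); (5, m1); (13, p1); (14, p1); (16, m1); (17, p1); (19, m1)] [:: (45, p1)] [:: (7, m1); (10, p1); (13, p1); (14, m1); (17, p1); (20, p1)];
  mk 49 [:: (1, p1); (4, p1)] [:: (32, p1); (34, m1); (39, p1)] [:: (1, m1); (4, p1); (9, p1); (12, m1); (15, p1); (16, p1); (18, m1); (19, m1)];
  mk 49 [:: (0, p1); (2, m1); (3, p1); (5, m1); (7, m1); (9, p1); (10, m1); (12, p1); (14, p1); (16, m1); (17, p1); (19, m1)] [:: (24, p1); (25, p1); (26, m1); (41, m1); (46, p1); (47, m1)] [:: (2, p1); (5, m1)];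
  mk 49 [:: (14, p1); (17, p1)] [:: (24, m1); (27, p1); (31, m1); (38, m1); (41, p1); (45, m1); (48, p1)] [:: (8, m1); (9, m1); (11, p1); (12, p1); (14, p1); (15, m1); (16, m1); (17, m1); (18, p1); (19, p1)];
  mk 49 [:: (1, p1); (4, p1); (8, m1); (11, m1); (14, m1); (17, m1); (20, p1)] [:: (34, p1); (46, m1); (47, p1)] [:: (13, m1); (16, m1); (19, p1)];
  mk 49 [:: (0, p1); (3, p1); (6, m1); (7, m1); (10, m1); (13, p1); (14, p1); (17, p1); (20, m1)] [:: (27, p1); (41, p1); (46, m1); (47, p1)] [:: (13, m1)];
  mk 49 [:: (1, p1); (4, p1); (13, m1); (14, p1); (15, p1); (17, p1); (18, p1)] [:: (46, p1)] [:: (1, p1); (2, p1); (4, m1); (5, m1); (6, m1); (8, p1); (9, p1); (11, m1); (12, m1); (13, m1)];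
  mk 49 [:: (1, p1); (4, p1); (14, m1); (16, p1); (17, m1); (19, p1)] [:: (31, p1); (39, m1)] [:: (0, m1); (3, p1); (7, m1); (8, p1); (9, p1); (10, p1); (11, m1); (12, m1); (15, p1); (16, p1); (18, m1); (19, m1)];
  mk 49 [:: (1, p1); (4, p1); (7, p1); (8, m1); (10, p1); (11, m1); (14, m1); (15, p1); (17, m1); (18, p1)] [:: (25, m1); (26, p1); (39, m1); (40, p1); (46, m1); (47, p1)] [:: (7, m1); (8, p1); (10, p1); (11, m1)];
  mk 49 [:: (2, p1); (5, p1); (6, m1); (14, m1); (16, p1); (17, m1); (19, p1)] [:: (41, p1); (45, p1)] [:: (0, p1); (3, m1); (13, p1); (14, m1); (17, p1); (20, p1)];
  mk 49 [:: (1, p1); (2, m1); (4, p1); (5, m1)] [:: (39, p1)] [:: (0, m1); (1, p1); (2, p1); (3, p1); (4, m1); (5, m1); (7, m1); (10, p1)];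
  mk 49 [:: (2, m1); (5, m1); (9, p1); (12, p1); (14, p1); (16, m1); (17, p1); (19, m1)] [:: (24, m1); (25, m1); (26, p1); (38, m1); (39, m1); (40, p1); (46, m1); (47, p1)] [:: (7, p1); (10, m1)];
  mk 49 [:: (6, p1); (13, m1); (14, m1); (17, m1); (20, p1)] [:: (27, m1); (41, m1); (45, p1); (48, m1)] [:: (13, p1); (14, m1); (17, p1); (20, p1)];
  mk 49 [:: (0, p1); (3, p1)] [:: (24, p1); (25, p1); (27, m1); (41, m1); (46, p1); (48, m1)] [:: (0, m1); (2, m1); (3, p1); (5, p1)];
  mk 49 [:: (14, p1); (15, p1); (17, p1); (18, p1); (20, m1)] [:: (34, p1)] [:: (1, p1); (2, p1); (4, m1); (5, m1); (6, m1); (13, m1); (15, m1); (16, (- 2%:Z)); (18, p1); (19, (2%:Z)); (20, p1)];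
  mk 49 [:: (14, p1); (16, m1); (17, p1); (19, m1)] [:: (38, p1); (39, p1); (40, m1); (41, m1)] [:: (9, m1); (12, p1); (16, m1); (19, p1)];
  mk 49 [:: (0, p1); (3, p1)] [:: (25, p1); (27, m1); (41, m1); (46, p1); (48, m1)] [:: (0, p1); (1, m1); (3, m1); (4, p1)];
  mk 49 [:: (1, p1); (4, p1); (14, p1); (15, p1); (17, p1); (18, p1); (20, m1)] [:: (34, m1); (46, m1)] [:: (1, p1); (2, p1); (4, m1); (5, m1); (6, m1); (13, m1); (15, m1); (16, m1); (18, p1); (19, p1)];
  mk 49 [:: (14, p1); (17, p1); (20, m1)] [:: (34, p1); (45, m1); (48, p1)] [:: (13, m1); (20, m1)];
  mk 49 [:: (2, p1); (5, p1); (7, p1); (9, m1); (10, p1); (12, m1); (14, m1); (16, p1); (17, m1); (19, p1)] [:: (24, p1); (25, p1); (26, m1); (39, p1); (40, m1); (46, p1); (47, m1)] [:: (2, p1); (5, m1); (7, m1); (10, p1)];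
  mk 49 [:: (7, p1); (9, m1); (10, p1); (12, m1); (14, m1); (16, p1); (17, m1); (19, p1)] [:: (33, p1); (34, m1); (40, p1); (46, m1); (47, p1)] [:: (2, p1); (5, m1); (9, p1); (12, m1)];
  mk 49 [:: (7, p1); (8, p1); (9, m1); (10, p1); (11, p1); (12, m1); (14, m1); (15, m1); (16, p1); (17, m1); (18, m1); (19, p1)] [:: (33, p1); (34, m1)] [:: (8, m1); (9, m1); (11, p1); (12, p1)];
  mk 49 [:: (0, p1); (3, p1); (6, m1); (13, p1); (20, m1)] [:: (27, p1); (41, p1); (46, m1); (48, p1)] [:: (1, m1); (2, m1); (4, p1); (5, p1); (6, p1); (13, p1)];
  mk 49 [:: (1, p1); (4, p1); (8, m1); (11, m1); (14, m1); (15, p1); (17, m1); (18, p1)] [:: (25, p1); (26, m1); (31, m1); (39, p1); (40, m1); (46, p1); (47, m1)] [:: (7, m1); (9, m1); (10, p1); (12, p1); (16, m1); (19, p1)];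
  mk 49 [:: (1, p1); (4, p1); (8, m1); (11, m1)] [:: (31, m1); (32, m1); (33, p1); (46, m1); (47, p1)] [:: (9, p1); (12, m1); (16, p1); (19, m1)];
  mk 49 [:: (14, p1); (16, m1); (17, p1); (19, m1)] [:: (31, p1); (38, p1); (41, m1)] [:: (0, m1); (3, p1); (9, p1); (12, m1); (14, p1); (16, p1); (17, m1); (19, m1)];
  mk 49 [:: (1, p1); (4, p1); (7, p1); (9, m1); (10, p1); (12, m1); (14, m1); (16, p1); (17, m1); (19, p1)] [:: (33, p1); (34, m1); (39, p1)] [:: (2, m1); (5, p1); (8, p1); (11, m1)];
  mk 49 [:: (7, p1); (10, p1); (14, m1); (17, m1)] [:: (26, p1); (40, p1); (46, m1); (47, p1)] [:: (8, m1); (9, m1); (11, p1); (12, p1)];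
  mk 49 [:: (1, m1); (2, m1); (8, p1); (9, p1); (22, p1); (23, p1); (29, m1); (30, m1)] [:: (15, p1); (16, m1); (18, p1); (19, m1)] [:: (25, p1)];
  mk 49 [:: (2, m1); (7, m1); (14, m1); (23, p1); (28, p1); (35, p1); (42, p1); (43, p1); (44, p1)] [:: (6, p1); (13, m1); (20, p1)] [:: (45, p1); (47, p1); (48, p1)];
  mk 49 [:: (8, m1); (9, m1); (15, m1); (16, m1); (29, p1); (30, p1); (36, p1); (37, p1)] [:: (1, p1); (4, p1); (15, p1); (18, p1)] [:: (25, p1); (32, p1); (34, p1)];
  mk 49 [:: (0, m1); (1, m1); (21, p1); (22, p1)] [:: (2, p1); (5, p1); (14, m1); (16, p1); (17, m1); (19, p1)] [:: (26, p1); (27, p1); (33, p1)];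
  mk 49 [:: (8, p1); (15, p1); (16, p1); (29, m1); (36, m1); (37, m1)] [:: (1, p1); (4, p1); (8, m1); (11, m1); (15, p1); (18, p1)] [:: (31, p1); (32, p1); (33, p1); (34, p1); (38, m1); (39, m1); (40, m1); (41, m1); (46, p1)];
  mk 49 [:: (8, m1); (9, m1); (15, m1); (16, m1); (29, p1); (30, p1); (36, p1); (37, p1)] [:: (14, p1); (17, p1)] [:: (24, p1); (26, p1); (27, p1); (31, p1); (33, p1); (34, p1); (45, m1); (47, m1); (48, m1)];
  mk 49 [:: (15, p1); (36, m1); (43, m1)] [:: (1, p1); (4, p1); (8, m1); (9, m1); (11, m1); (12, m1); (13, p1); (14, m1); (16, p1); (17, m1); (19, p1)] [:: (34, p1); (41, m1)];
  mk 49 [:: (42, m1); (43, m1)] [:: (0, p1); (3, p1); (6, m1)] [:: (34, m1); (47, p1); (48, p1)];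
  mk 49 [:: (14, m1); (35, p1); (43, m1)] [:: (0, m1); (3, m1); (6, p1); (7, p1); (9, m1); (10, p1); (12, m1); (14, m1); (16, p1); (17, m1); (19, p1)] [:: (34, m1); (41, p1); (47, p1)];
  mk 49 [:: (0, m1); (2, p1); (14, m1); (21, p1); (23, m1); (35, p1); (42, p1); (43, m1); (44, m1)] [:: (2, p1); (5, p1); (6, m1)] [:: (47, p1)];
  mk 49 [:: (1, m1); (2, m1); (22, p1); (23, p1); (43, p1); (44, p1)] [:: (2, m1); (5, m1); (13, p1); (14, p1); (16, m1); (17, p1); (19, m1)] [:: (27, p1)];
  mk 49 [:: (7, m1); (9, p1); (15, p1); (16, p1); (28, p1); (30, m1); (36, m1); (37, m1)] [:: (1, p1); (4, p1)] [:: (32, p1); (33, p1); (46, m1)];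
  mk 49 [:: (14, p1); (35, m1)] [:: (0, p1); (2, m1); (3, p1); (5, m1); (7, m1); (9, p1); (10, m1); (12, p1); (14, p1); (16, m1); (17, p1); (19, m1)] [:: (24, p1); (31, p1); (34, p1); (38, m1); (41, m1); (47, m1)];
  mk 49 [:: (2, p1); (8, m1); (9, m1); (15, m1); (16, m1); (23, m1); (29, p1); (30, p1); (36, p1); (37, p1)] [:: (14, p1); (17, p1)] [:: (24, m1); (25, m1); (26, m1); (27, m1); (45, p1); (47, p1); (48, p1)];
  mk 49 [:: (16, m1); (37, p1); (43, m1)] [:: (1, p1); (4, p1); (8, m1); (11, m1); (14, m1); (17, m1); (20, p1)] [:: (34, m1); (41, p1); (46, p1)];
  mk 49 [:: (43, m1)] [:: (0, p1); (3, p1); (6, m1); (7, m1); (10, m1); (13, p1); (14, p1); (17, p1); (20, m1)] [:: (34, m1); (41, p1); (45, p1); (47, p1)];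
  mk 49 [:: (7, p1); (8, p1); (14, p1); (15, p1); (28, m1); (29, m1); (35, m1); (36, m1); (42, m1); (43, m1)] [:: (1, p1); (4, p1); (13, m1); (14, p1); (15, p1); (17, p1); (18, p1)] [:: (34, p1)];
  mk 49 [:: (0, m1); (1, m1); (8, p1); (9, p1); (15, p1); (16, p1); (21, p1); (22, p1); (29, m1); (30, m1); (36, m1); (37, m1)] [:: (1, p1); (4, p1); (14, m1); (16, p1); (17, m1); (19, p1)] [:: (25, p1); (33, m1)];
  mk 49 [:: (1, m1); (8, p1); (22, p1); (29, m1)] [:: (1, p1); (4, p1); (7, p1); (8, m1); (10, p1); (11, m1); (14, m1); (15, p1); (17, m1); (18, p1)] [:: (31, m1); (33, m1); (34, m1); (38, p1); (40, p1); (41, p1)];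
  mk 49 [:: (0, p1); (2, m1); (21, m1); (23, p1); (43, p1); (44, p1)] [:: (2, p1); (5, p1); (6, m1); (14, m1); (16, p1); (17, m1); (19, p1)] [:: (27, p1); (47, p1)];
  mk 49 [:: (0, m1); (1, m1); (7, p1); (14, p1); (21, p1); (22, p1); (28, m1); (35, m1)] [:: (1, p1); (2, m1); (4, p1); (5, m1)] [:: (33, p1)];
  mk 49 [:: (1, p1); (22, m1)] [:: (2, m1); (5, m1); (9, p1); (12, p1); (14, p1); (16, m1); (17, p1); (19, m1)] [:: (24, m1); (26, m1); (31, m1); (33, m1); (34, m1); (38, p1); (40, p1); (41, p1)];
  mk 49 [:: (2, m1); (23, p1); (43, p1); (44, p1)] [:: (6, p1); (13, m1); (14, m1); (17, m1); (20, p1)] [:: (27, p1); (45, m1); (47, m1); (48, m1)];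
  mk 49 [:: (0, m1); (14, m1); (21, p1); (35, p1)] [:: (0, p1); (3, p1)] [:: (24, p1); (31, p1); (34, p1); (45, m1); (47, m1); (48, m1)];
  mk 49 [:: (7, p1); (9, m1); (14, p1); (16, (- 2%:Z)); (28, m1); (30, p1); (35, m1); (37, (2%:Z)); (42, m1); (43, m1); (44, p1)] [:: (14, p1); (15, p1); (17, p1); (18, p1); (20, m1)] [:: (46, p1)];
  mk 49 [:: (15, m1); (16, m1); (36, p1); (37, p1)] [:: (14, p1); (16, m1); (17, p1); (19, m1)] [:: (26, p1); (33, p1); (40, m1); (47, m1)];
  mk 49 [:: (0, p1); (7, m1); (21, m1); (28, p1)] [:: (0, p1); (3, p1)] [:: (31, p1); (34, p1); (45, m1); (47, m1); (48, m1)];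
  mk 49 [:: (7, p1); (9, m1); (14, p1); (16, m1); (28, m1); (30, p1); (35, m1); (37, p1); (42, m1); (43, m1)] [:: (1, p1); (4, p1); (14, p1); (15, p1); (17, p1); (18, p1); (20, m1)] [:: (34, m1); (46, m1)];
  mk 49 [:: (43, m1); (44, m1)] [:: (14, p1); (17, p1); (20, m1)] [:: (27, m1); (46, p1); (48, p1)];
  mk 49 [:: (1, m1); (14, p1); (22, p1); (35, m1)] [:: (2, p1); (5, p1); (7, p1); (9, m1); (10, p1); (12, m1); (14, m1); (16, p1); (17, m1); (19, p1)] [:: (24, p1); (31, p1); (33, p1); (34, p1); (38, m1); (40, m1); (41, m1)];
  mk 49 [:: (14, p1); (15, p1); (35, m1); (36, m1)] [:: (7, p1); (9, m1); (10, p1); (12, m1); (14, m1); (16, p1); (17, m1); (19, p1)] [:: (34, m1); (39, p1); (40, p1); (41, p1); (46, m1)];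
  mk 49 [:: (8, m1); (15, m1); (29, p1); (36, p1)] [:: (7, p1); (8, p1); (9, m1); (10, p1); (11, p1); (12, m1); (14, m1); (15, m1); (16, p1); (17, m1); (18, m1); (19, p1)] [:: (39, p1); (46, m1)];
  mk 49 [:: (7, m1); (14, m1); (28, p1); (35, p1); (42, p1); (43, p1)] [:: (0, p1); (3, p1); (6, m1); (13, p1); (20, m1)] [:: (34, m1); (45, p1); (47, p1); (48, p1)];
  mk 49 [:: (1, m1); (15, m1); (16, m1); (22, p1); (36, p1); (37, p1)] [:: (1, p1); (4, p1); (8, m1); (11, m1); (14, m1); (15, p1); (17, m1); (18, p1)] [:: (25, m1); (31, p1); (33, p1); (34, p1); (38, m1); (40, m1); (41, m1)];
  mk 49 [:: (15, p1); (16, p1); (36, m1); (37, m1)] [:: (1, p1); (4, p1); (8, m1); (11, m1)] [:: (25, m1); (32, m1); (34, m1); (39, p1); (41, p1)];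
  mk 49 [:: (0, m1); (2, p1); (15, p1); (16, p1); (21, p1); (23, m1); (36, m1); (37, m1)] [:: (14, p1); (16, m1); (17, p1); (19, m1)] [:: (25, p1); (26, p1); (47, m1)];
  mk 49 [:: (8, p1); (14, m1); (29, m1); (35, p1)] [:: (1, p1); (4, p1); (7, p1); (9, m1); (10, p1); (12, m1); (14, m1); (16, p1); (17, m1); (19, p1)] [:: (33, p1); (39, p1); (46, m1)];
  mk 49 [:: (8, m1); (15, m1); (29, p1); (36, p1)] [:: (7, p1); (10, p1); (14, m1); (17, m1)] [:: (34, m1); (38, p1); (40, p1); (41, p1)];
  mk 49 [:: (5, p1); (6, p1); (19, m1); (20, m1); (26, m1); (27, m1); (40, p1); (41, p1)] [:: (35, p1); (36, m1); (38, p1); (39, m1)] [:: (15, p1); (16, m1)];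
  mk 49 [:: (12, p1); (13, p1); (33, m1); (34, m1)] [:: (29, p1); (32, p1); (36, p1); (39, p1)] [:: (1, p1); (2, m1); (8, p1); (9, m1); (15, p1); (16, m1)];
  mk 49 [:: (3, m1); (10, p1); (20, m1); (24, p1); (31, m1); (41, p1)] [:: (21, m1); (22, (2%:Z)); (23, p1); (24, m1); (25, (2%:Z)); (26, p1); (43, m1); (44, m1); (46, m1); (47, m1)] [:: (0, p1); (14, p1); (16, p1)];
  mk 49 [:: (3, p1); (10, m1); (17, m1); (18, m1); (24, m1); (31, p1); (38, p1); (39, p1)] [:: (21, m1); (22, p1); (24, m1); (25, p1)] [:: (14, p1); (16, p1)];
  mk 49 [:: (4, p1); (6, m1); (11, m1); (13, p1); (20, p1); (25, m1); (27, p1); (32, p1); (34, m1); (41, m1)] [:: (35, m1); (36, p1); (38, m1); (39, p1); (42, p1); (43, m1); (45, p1); (46, m1)] [:: (0, m1)];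
  mk 49 [:: (4, m1); (5, p1); (10, m1); (17, p1); (18, p1); (19, m1); (20, p1); (25, p1); (26, m1); (31, p1); (38, m1); (39, m1); (40, p1); (41, m1)] [:: (36, m1); (37, m1); (39, m1); (40, m1)] [:: (0, m1); (1, m1); (7, m1); (8, m1)];
  mk 49 [:: (18, p1); (19, m1); (39, m1); (40, p1)] [:: (22, p1); (25, p1); (35, p1); (38, p1)] [:: (14, m1); (15, m1); (16, p1)];
  mk 49 [:: (11, p1); (13, m1); (18, m1); (32, m1); (34, p1); (39, p1)] [:: (28, m1); (29, (2%:Z)); (30, p1); (31, m1); (32, (2%:Z)); (33, p1); (36, p1); (37, p1); (39, p1); (40, p1)] [:: (0, m1); (7, m1)];
  mk 49 [:: (5, m1); (6, m1); (12, p1); (13, p1); (26, p1); (27, p1); (33, m1); (34, m1)] [:: (22, m1); (25, m1); (43, p1); (46, p1)] [:: (1, m1); (2, p1); (15, m1); (16, p1)];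
  mk 49 [:: (10, m1); (31, p1)] [:: (23, p1); (26, p1); (29, m1); (30, m1); (32, m1); (33, m1); (36, m1); (37, m1); (39, m1); (40, m1)] [:: (2, m1); (9, m1); (16, m1)];
  mk 49 [:: (3, p1); (5, p1); (6, p1); (10, m1); (12, m1); (13, m1); (17, m1); (18, m1); (19, p1); (20, m1); (24, m1); (26, m1); (27, m1); (31, p1); (33, p1); (34, p1); (38, p1); (39, p1); (40, m1); (41, p1)] [:: (22, m1); (25, m1)] [:: (0, p1); (1, p1); (7, p1); (8, p1); (14, p1); (15, p1)];
  mk 49 [:: (13, p1); (34, m1)] [:: (28, m1); (29, (2%:Z)); (30, p1); (31, m1); (32, (2%:Z)); (33, p1); (35, p1); (38, p1); (42, m1); (43, p1); (44, p1); (45, m1); (46, p1); (47, p1)] [:: (9, p1)];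
  mk 49 [:: (20, p1); (41, m1)] [:: (21, p1); (22, m1); (23, m1); (24, p1); (25, m1); (26, m1); (42, m1); (43, p1); (44, p1); (45, m1); (46, p1); (47, p1)] [:: (0, m1); (14, m1)];
  mk 49 [:: (11, p1); (12, m1); (13, m1); (32, m1); (33, p1); (34, p1)] [:: (29, m1); (32, m1); (36, m1); (37, m1); (39, m1); (40, m1)] [:: (0, m1); (1, m1); (2, p1); (7, m1); (8, m1); (9, p1)];
  mk 49 [:: (5, p1); (6, p1); (12, m1); (13, m1); (20, m1); (26, m1); (27, m1); (33, p1); (34, p1); (41, p1)] [:: (22, m1); (25, m1); (35, p1); (36, m1); (38, p1); (39, m1); (43, p1); (46, p1)] [:: (0, p1); (15, m1); (16, p1)];
  mk 49 [:: (4, p1); (11, m1); (25, m1); (32, p1)] [:: (28, m1); (29, (2%:Z)); (31, m1); (32, (2%:Z)); (35, p1); (38, p1); (42, m1); (45, m1)] [:: (7, p1); (9, p1)];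
  mk 49 [:: (4, p1); (10, p1); (25, m1); (31, m1)] [:: (29, m1); (30, m1); (32, m1); (33, m1); (36, m1); (37, m1); (39, m1); (40, m1)] [:: (0, m1); (2, m1); (7, m1); (9, m1)];
  mk 49 [:: (18, m1); (39, p1)] [:: (21, p1); (22, m1); (24, p1); (25, m1); (28, m1); (31, m1); (35, m1); (38, m1)] [:: (0, p1); (7, p1); (14, p1)];
  mk 49 [:: (3, p1); (6, p1); (10, m1); (24, m1); (27, m1); (31, p1)] [:: (43, p1); (44, p1); (46, p1); (47, p1)] [:: (2, p1)];
  mk 49 [:: (4, m1); (5, p1); (11, p1); (12, m1); (13, m1); (25, p1); (26, m1); (32, m1); (33, p1); (34, p1)] [:: (37, m1); (40, m1); (43, m1); (46, m1)] [:: (0, p1); (1, p1); (2, m1); (7, p1); (8, p1)];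
  mk 49 [:: (3, p1); (5, p1); (6, p1); (10, m1); (12, m1); (13, m1); (24, m1); (26, m1); (27, m1); (31, p1); (33, p1); (34, p1)] [:: (22, p1); (25, p1)] [:: (0, (2%:Z)); (1, (2%:Z)); (2, m1); (7, p1); (8, p1); (14, p1); (15, p1)];
  mk 49 [:: (3, p1); (10, m1); (24, m1); (31, p1)] [:: (22, p1); (23, p1); (25, p1); (26, p1); (43, m1); (44, m1); (46, m1); (47, m1)] [:: (0, p1); (2, p1); (14, p1); (16, p1)];
  mk 49 [:: (4, p1); (11, m1); (13, p1); (25, m1); (32, p1); (34, m1)] [:: (28, m1); (29, (2%:Z)); (30, p1); (31, m1); (32, (2%:Z)); (33, p1); (35, p1); (37, p1); (38, p1); (40, p1); (42, m1); (43, p1); (45, m1); (46, p1)] [:: (0, m1); (7, m1); (9, m1)];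
  mk 49 [:: (10, p1); (18, p1); (31, m1); (39, m1)] [:: (21, m1); (22, p1); (24, m1); (25, p1); (29, p1); (30, p1); (32, p1); (33, p1); (36, p1); (37, p1); (39, p1); (40, p1)] [:: (0, m1); (7, m1); (16, p1)];
  mk 49 [:: (10, p1); (17, m1); (18, m1); (19, p1); (20, m1); (31, m1); (38, p1); (39, p1); (40, m1); (41, p1)] [:: (22, m1); (25, m1); (36, m1); (37, m1); (39, m1); (40, m1)] [:: (0, m1); (1, m1); (7, m1); (8, m1); (16, m1)];
  mk 49 [:: (4, p1); (5, m1); (11, m1); (12, p1); (25, m1); (26, p1); (32, p1); (33, m1)] [:: (36, m1); (39, m1); (43, p1); (46, p1)] [:: (7, m1); (8, m1)];
  mk 49 [:: (10, p1); (17, m1); (20, m1); (31, m1); (38, p1); (41, p1)] [:: (21, p1); (22, (- 2%:Z)); (23, m1); (24, p1); (25, (- 2%:Z)); (26, m1); (36, m1); (37, m1); (39, m1); (40, m1)] [:: (16, p1)];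
  mk 49 [:: (4, p1); (11, m1); (25, m1); (32, p1)] [:: (29, p1); (32, p1); (36, p1); (39, p1); (43, m1); (46, m1)] [:: (0, p1); (1, p1); (2, m1); (7, m1); (9, m1)];
  mk 49 [:: (12, m1); (13, m1); (18, p1); (33, p1); (34, p1); (39, m1)] [:: (29, m1); (32, m1); (35, m1); (38, m1)] [:: (0, p1); (7, p1); (15, m1); (16, p1)]
].
Lemma chk7 : check 7 L7. Proof. vm_compute. reflexivity. Qed.

Local Close Scope ring_scope.
Theorem mainTheorem2 (K : fieldType) : mxmul_rank_le K 7 7 7 250.
Proof. exact: (check_rank K chk7). Qed.
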